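(* Let $\big(Z,\psi^{(z)},(I^{(z)}_{A},\phi^{(z)}_{A})_{A\in P_{\mathbb A}}\big)$ and $\big(C,\psi^{(c)},(I^{(c)}_{A},\phi^{(c)}_{A})_{A\in P_{\mathbb A}}\big)$ be minimal action-induced representations (minAIRs) of the same family $\{D_A\}_{A\in P_{\mathbb A}}$, with $Z\subseteq\mathbb R^{d_Z}$, $C\subseteq\mathbb R^{d_C}$. Let $Z|_{\mathrm{patch}}\subseteq Z$ be convex and open in $\mathbb R^{d_Z}$. Let $\mathcal A\subseteq P_{\mathbb A}$ be a nonempty set of allowed action combinations, $I^{(z)}_O:=\bigcap_{A\in\mathcal A}I^{(z)}_A$, $\pi^{(z)}_O(z)=z_O:=(z_j)_{j\in I^{(z)}_O}$, $Z_O=\{\pi^{(z)}_O(z):z\in Z\}$, and analogously $I^{(c)}_O$, $\pi^{(c)}_O$, $C_O$. Put $Z_O|_{\mathrm{patch}}:=\pi^{(z)}_O(Z|_{\mathrm{patch}})$ and $Z_A|_{\mathrm{patch}}:=\pi^{(z)}_A(Z|_{\mathrm{patch}})$. Define $g_O$ on $Z_O|_{\mathrm{patch}}$ by $$g_O=\pi^{(c)}_O\circ(\phi^{(c)}_A)^{-1}\circ\phi^{(z)}_A\circ i_A,$$ where $A\in\mathcal A$ and $i_A$ maps $z_O$ to some $z_A\in Z_A|_{\mathrm{patch}}$ with $\pi^{(z)}_O(z_A)=z_O$ (here $\pi^{(z)}_O$, $\pi^{(c)}_O$ are applied to vectors indexed by $I_A\supseteq I_O$ by selecting the coordinates in $I_O$),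 and let $C_O|_{\mathrm{patch}}$ be the image of $g_O$. Then $g_O:Z_O|_{\mathrm{patch}}\to C_O|_{\mathrm{patch}}$ is well-defined, i.e. independent of the choice of $A\in\mathcal A$ and of the embedding $i_A$; it is surjective and continuous (with respect to subspace topologies of the embedding Euclidean spaces); and $C_O|_{\mathrm{patch}}$ is path-connected. If additionally $C|_{\mathrm{patch}}\subseteq C_{\mathrm{conv}}\subseteq C$ for some convex subset $C_{\mathrm{conv}}$ that is open in $\mathbb R^{d_C}$, then $g_O$ is a homeomorphism from $Z_O|_{\mathrm{patch}}$ onto $C_O|_{\mathrm{patch}}$ (continuous, invertible, with continuous inverse), and $C_O|_{\mathrm{patch}}$ is open.
   Context: Setting. $X\subseteq\mathbb R^{d_x}$ is a continuous manifold (input data), $\mathbb A=\{1,\dots,n_{\mathbb A}\}$ a finite set of elementary actions, $P_{\mathbb A}\subseteq\mathcal P(\mathbb A)$ the allowed action combinations. For each $A\in P_{\mathbb A}$ there is a deterministic map $y_A:X\to Y_A\subseteq\mathbb R^{d_{Y_A}}$ with $Y_A$ a continuous manifold; $D_A=\{(x,y_A(x)):x\in X\}$. AIR. Given a continuous manifold $Z\subseteq\mathbb R^{d_Z}$, index sets $I_A\subseteq\{1,\dots,d_Z\}$, projections $\pi_A(z)=z_A:=(z_i)_{i\in I_A}$ onto $Z_A=\{(z_i)_{i\in I_A}:z\in Z\}$, and continuous maps $\psi:X\to Z$, $\phi_A:Z_A\to Y_A$ with $\phi_A\circ\pi_A\circ\psi=y_A$ on $X$ for all $A\in P_{\mathbb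 A}$, the tuple $\big(Z,\psi,(I_A,\phi_A)_{A\in P_{\mathbb A}}\big)$ is an action-induced representation (AIR). minAIR. An AIR is minimal if $\psi$ is surjective, $d_Z=\big|\bigcup_{A\in P_{\mathbb A}}I_A\big|$, every $\phi_A$ is invertible with continuous inverse, and $Z$ is open in $\mathbb R^{d_Z}$ (with the subspace topology). $C|_{\mathrm{patch}}$ denotes the set of $c\in C$ that correspond to some $z\in Z|_{\mathrm{patch}}$, i.e. satisfy $\phi^{(c)}_A(\pi^{(c)}_A(c))=\phi^{(z)}_A(\pi^{(z)}_A(z))$ for all $A\in P_{\mathbb A}$. *)

(* Defs.v *)
From HB Require Import structures.
From mathcomp Require Import all_boot all_order all_algebra.
From mathcomp Require Import all_classical all_reals.
From mathcomp Require Import all_analysis.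
Set Implicit Arguments. Unset Printing Implicit Defensive.
Import Order.TTheory GRing.Theory Num.Theory.
Local Open Scope classical_set_scope.
Local Open Scope ring_scope.

Import numFieldNormedType.Exports.

Section AIR.
Variable R : realType.

(* Euclidean space R^n is 'rV[R]_n (with its product/normed topology). *)

Definition homeo_on (T U : topologicalType) (A : set T) (B : set U)
    (f : T -> U) : Prop :=
  (forall x, A x -> B (f x)) /\ {within A, continuous f} /\
  exists g : U -> T,
    [/\ forall y, B y -> A (g y),
        forall x, A x -> g (f x) = x,
        forall y, B y -> f (g y) = y &
        {within B, continuous g}].
Arguments homeo_on {T U} A B f.

(* A subset of R^n is a (topological, "continuous") manifold: every point
   has a neighbourhood relatively open in M homeomorphic to an open subset
   of some R^k. (Hausdorff / second countability are automatic in R^n.) *)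
Definition top_manifold (n : nat) (M : set 'rV[R]_n) : Prop :=
  forall x, M x -> exists (O : set 'rV[R]_n) (k : nat) (V : set 'rV[R]_k)
    (f : 'rV[R]_n -> 'rV[R]_k),
    [/\ open O, O x, open V & homeo_on (M `&` O) V f].

Definition convex (n : nat) (A : set 'rV[R]_n) : Prop :=
  @convex_set R 'rV[R]_n A.

Definition path_connected (n : nat) (A : set 'rV[R]_n) : Prop :=
  forall x y, A x -> A y -> exists gamma : R -> 'rV[R]_n,
    [/\ gamma 0 = x, gamma 1 = y,
        (forall t, 0 <= t <= 1 -> A (gamma t)) &
        {within `[0, 1], continuous gamma}].

(* pi_I(z) = (z_i)_{i in I}, coordinates listed in increasing order. *)
Definition prj (n : nat) (I : {set 'I_n}) (z : 'rV[R]_n) : 'rV[R]_#|I| :=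
  \row_(k < #|I|) z 0 (enum_val k).
Arguments prj {n} I z.

Definition extend (n : nat) (J : {set 'I_n}) (v : 'rV[R]_#|J|) : 'rV[R]_n :=
  \row_(i < n) (if [pick k : 'I_#|J| | enum_val k == i] is Some k
                then v 0 k else 0).
Arguments extend {n} J v.

Definition subproj (n : nat) (I J : {set 'I_n}) (v : 'rV[R]_#|J|)
  : 'rV[R]_#|I| := prj I (extend J v).
Arguments subproj {n} I J v.

Definition imprj (n : nat) (Z : set 'rV[R]_n) (I : {set 'I_n}) :=
  prj I @` Z.
Arguments imprj {n} Z I.

(* The family {D_A}: data X, Y_A, y_A with X, Y_A manifolds, y_A : X -> Y_A. *)
Definition family_ok (na dx : nat) (P : {set {set 'I_na}})
    (dY : {set 'I_na} -> nat) (X : set 'rV[R]_dx)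
    (Y : forall A, set 'rV[R]_(dY A))
    (y : forall A, 'rV[R]_dx -> 'rV[R]_(dY A)) : Prop :=
  top_manifold X /\
  forall A, A \in P -> top_manifold (Y A) /\ (forall x, X x -> Y A (y A x)).

Definition is_AIR (na dx : nat) (P : {set {set 'I_na}})
    (dY : {set 'I_na} -> nat) (X : set 'rV[R]_dx)
    (Y : forall A, set 'rV[R]_(dY A))
    (y : forall A, 'rV[R]_dx -> 'rV[R]_(dY A))
    (dZ : nat) (Z : set 'rV[R]_dZ) (psi : 'rV[R]_dx -> 'rV[R]_dZ)
    (I : {set 'I_na} -> {set 'I_dZ})
    (phi : forall A, 'rV[R]_#|I A| -> 'rV[R]_(dY A)) : Prop :=
  [/\ top_manifold Z,
      (forall x, X x -> Z (psi x)),
      {within X, continuous psi} &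
      forall A, A \in P ->
        [/\ forall za, imprj Z (I A) za -> Y A (phi A za),
            {within imprj Z (I A), continuous (phi A)} &
            forall x, X x -> phi A (prj (I A) (psi x)) = y A x]].

Definition is_minAIR (na dx : nat) (P : {set {set 'I_na}})
    (dY : {set 'I_na} -> nat) (X : set 'rV[R]_dx)
    (Y : forall A, set 'rV[R]_(dY A))
    (y : forall A, 'rV[R]_dx -> 'rV[R]_(dY A))
    (dZ : nat) (Z : set 'rV[R]_dZ) (psi : 'rV[R]_dx -> 'rV[R]_dZ)
    (I : {set 'I_na} -> {set 'I_dZ})
    (phi : forall A, 'rV[R]_#|I A| -> 'rV[R]_(dY A)) : Prop :=
  [/\ @is_AIR na dx P dY X Y y dZ Z psi I phi,
      psi @` X = Z,
      dZ = #|(\bigcup_(A in P) I A)%SET|,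
      (forall A, A \in P -> homeo_on (imprj Z (I A)) (Y A) (phi A)) &
      open Z].

Definition Cpatch (na : nat) (P : {set {set 'I_na}})
    (dY : {set 'I_na} -> nat)
    (dZ : nat) (Iz : {set 'I_na} -> {set 'I_dZ})
    (phiz : forall A, 'rV[R]_#|Iz A| -> 'rV[R]_(dY A)) (Zp : set 'rV[R]_dZ)
    (dC : nat) (C : set 'rV[R]_dC) (Ic : {set 'I_na} -> {set 'I_dC})
    (phic : forall A, 'rV[R]_#|Ic A| -> 'rV[R]_(dY A)) : set 'rV[R]_dC :=
  [set c | C c /\ exists z, Zp z /\
     forall A, A \in P -> phic A (prj (Ic A) c) = phiz A (prj (Iz A) z)].

End AIR.

Arguments homeo_on {T U} A B f.
Arguments top_manifold {R n} M.
Arguments convex {R n} A.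
Arguments path_connected {R n} A.
Arguments prj {R n} I z.
Arguments extend {R n} J v.
Arguments subproj {R n} I J v.
Arguments imprj {R n} Z I.
Arguments family_ok {R na dx} P dY X Y y.
Arguments is_AIR {R na dx} P dY X Y y {dZ} Z psi I phi.
Arguments is_minAIR {R na dx} P dY X Y y {dZ} Z psi I phi.
Arguments Cpatch {R na} P dY {dZ} Iz phiz Zp {dC} C Ic phic.

(* Main.v *)
Require Import Defs.
From HB Require Import structures.
From mathcomp Require Import all_boot all_order all_algebra.
From mathcomp Require Import all_classical all_reals all_analysis.
Import Order.TTheory GRing.Theory Num.Theory.
Import numFieldNormedType.Exports.
Local Open Scope classical_set_scope.
Local Open Scope ring_scope.
From mathcomp Require Import ring lra.
Local Open Scope convex_scope.
Section Aux.
Variable R : realType.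

Lemma prjE n (I : {set 'I_n}) (z : 'rV[R]_n) k : prj I z 0 k = z 0 (enum_val k).
Proof. by rewrite /prj mxE. Qed.

Lemma enum_val_surj {n} {I : {set 'I_n}} {i} : i \in I ->
  exists k : 'I_#|I|, enum_val k = i.
Proof. by move=> Hi; exists (enum_rank_in Hi i); exact: enum_rankK_in. Qed.

Lemma prj_eqP n (I : {set 'I_n}) (z z' : 'rV[R]_n) :
  prj I z = prj I z' <-> {in I, forall i, z 0 i = z' 0 i}.
Proof.
split => [H i Hi|H].
  have [k <-] := enum_val_surj Hi.
  by move/rowP: H => /(_ k); rewrite !prjE.
by apply/rowP => k; rewrite !prjE; apply: H; exact: enum_valP.
Qed.

Lemma extend_enum n (I : {set 'I_n}) (v : 'rV[R]_#|I|) k :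
  extend I v 0 (enum_val k) = v 0 k.
Proof.
rewrite /extend mxE; case: pickP => [k' /eqP /enum_val_inj -> //|/(_ k)].
by rewrite eqxx.
Qed.

Lemma prj_extend n (I : {set 'I_n}) (v : 'rV[R]_#|I|) : prj I (extend I v) = v.
Proof. by apply/rowP => k; rewrite prjE extend_enum. Qed.

Lemma subproj_prj n (I J : {set 'I_n}) (z : 'rV[R]_n) :
  I \subset J -> subproj I J (prj J z) = prj I z.
Proof.
move=> IJ; apply/rowP => k; rewrite /subproj !prjE.
have Hi : enum_val k \in J := fintype.subsetP IJ _ (enum_valP k).
have [k' <-] := enum_val_surj Hi.
by rewrite extend_enum prjE.
Qed.

Lemma prjD n (I : {set 'I_n}) (z w : 'rV[R]_n) : prj I (z + w) = prj I z + prj I w.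
Proof. by apply/rowP => k; rewrite !mxE. Qed.
Lemma prjN n (I : {set 'I_n}) (z : 'rV[R]_n) : prj I (- z) = - prj I z.
Proof. by apply/rowP => k; rewrite !mxE. Qed.
Lemma prjZ n (I : {set 'I_n}) a (z : 'rV[R]_n) : prj I (a *: z) = a *: prj I z.
Proof. by apply/rowP => k; rewrite !mxE. Qed.

Lemma sel_continuous m n (s : 'I_n -> option 'I_m) :
  continuous (fun z : 'rV[R]_m => \row_j (if s j is Some k then z 0 k else 0)).
Proof.
move=> u A /nbhs_ballP[e /= e0 eA].
apply/nbhs_ballP; exists e => //= v [_ uv]; apply: eA; split => // i j.
rewrite !mxE; case: (s j) => [k|]; first exact: uv.
exact: ballxx.
Qed.

Lemma prj_continuous n (I : {set 'I_n}) : continuous (prj (R:=R) I).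
Proof.
have -> : prj I = (fun z : 'rV[R]_n => \row_j (if Some (enum_val j) is Some k then z 0 k else 0)).
  by apply/funext => z; apply/rowP => k; rewrite !mxE.
exact (@sel_continuous n #|I| (fun j => Some (enum_val j))).
Qed.

Lemma extend_continuous n (I : {set 'I_n}) : continuous (extend (R:=R) I).
Proof. exact: sel_continuous. Qed.

Lemma coord_continuous n j : continuous (fun z : 'rV[R]_n => z 0 j).
Proof.
move=> u A /nbhs_ballP[e /= e0 eA].
by apply/nbhs_ballP; exists e => //= v [_ uv]; apply: eA; exact: uv.
Qed.

Lemma cvg_rowP (T : Type) (F : set_system T) {FF : Filter F} n
    (f : T -> 'rV[R]_n) (l : 'rV[R]_n) :
  (forall j, (fun x => f x 0 j) @ F --> l 0 j) -> f @ F --> l.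
Proof.
move=> H A /nbhs_ballP[e /= e0 eA].
have : \forall x \near F, forall j, ball (l 0 j) e (f x 0 j).
  apply: filter_forall => j; exact: (H j _ (nbhsx_ballx _ _ e0)).
apply: filterS => x Hx; apply: eA; split => // i j; rewrite (ord1 i); exact: Hx.
Qed.

Lemma convE n (x y : 'rV[R]_n) (l : {i01 R}) :
  ((x : convex_lmodType _) <| l |> y) = l%:num *: x + (1 - l%:num) *: y.
Proof. by []. Qed.

Lemma convex_seg n (S : set 'rV[R]_n) p q t : convex S -> S p -> S q ->
  0 <= t -> t <= 1 -> S (p + t *: (q - p)).
Proof.
move=> cS Sp Sq t0 t1.
have h0 : 0 <= 1 - t by rewrite subr_ge0.
have h1 : 1 - t <= 1 by rewrite lerBlDr lerDl.
have := cS p q (Itv01 h0 h1); rewrite !in_setE => /(_ Sp Sq).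
rewrite convE /=; congr S.
have -> : 1 - (1 - t) = t by rewrite opprB addrC subrK.
by rewrite scalerBr scalerBl scale1r addrA addrAC.
Qed.


Lemma mxballE n (m w : 'rV[R]_n) r : ball m r w = (`|m - w| < r).
Proof. by rewrite mx_norm_ball. Qed.

Definition coord_dep {n} (S : set 'rV[R]_n) (I : {set 'I_n}) {T : Type}
  (F : 'rV[R]_n -> T) := forall j, j \notin I -> forall p q, S p -> S q ->
    (forall i, i != j -> p 0 i = q 0 i) -> F p = F q.

Lemma ball_step n (S : set 'rV[R]_n) (I : {set 'I_n}) (T : Type)
  (F : 'rV[R]_n -> T) (m y : 'rV[R]_n) (r : R) :
  coord_dep S I F ->
  ball m r `<=` S -> ball m r y -> {in I, forall i, m 0 i = y 0 i} -> F m = F y.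
Proof.
move=> HF mS [r0 my] mIy.
pose q k := \row_(j < n) (if (j < k)%N then y 0 j else m 0 j).
have qS k : S (q k).
  apply: mS; split => // i j; rewrite (ord1 i) !mxE.
  by case: ifP => _; [exact: my | exact: ballxx].
have q0 : q 0%N = m by apply/rowP => j; rewrite !mxE ltn0.
have qn : q n = y by apply/rowP => j; rewrite !mxE ltn_ord.
suff H : forall k, (k <= n)%N -> F (q k) = F m by rewrite -qn H.
elim => [_|k IH Hk]; first by rewrite q0.
rewrite -(IH (ltnW Hk)).
pose jk : 'I_n := Ordinal Hk.
have Hq : forall i, i != jk -> q k.+1 0 i = q k 0 i.
  move=> i ne; have nek : (nat_of_ord i == k) = false.
    apply/negbTE; move: ne; apply: contra => /eqP Hi; apply/eqP/val_inj.
    exact: Hi.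
  by rewrite !mxE ltnS leq_eqVlt nek.
case: (boolP (jk \in I)) => Hj.
  have -> : q k.+1 = q k; last by [].
  apply/rowP => i; case: (eqVneq i jk) => [->|ne]; last by rewrite Hq.
  by rewrite !mxE /= ltnSn ltnn mIy.
symmetry; apply: (HF jk Hj) => //; move=> i /Hq; exact: esym.
Qed.

Lemma staircase n (S : set 'rV[R]_n) (I : {set 'I_n}) (T : Type)
  (F : 'rV[R]_n -> T) :
  open S -> convex S -> coord_dep S I F ->
  forall p q, S p -> S q -> {in I, forall i, p 0 i = q 0 i} -> F p = F q.
Proof.
move=> oS cS HF p q Sp Sq pIq.
have /nbhs_ballP[e1 /= e10 B1] : nbhs p S by apply: open_nbhs_nbhs; split.
have /nbhs_ballP[e2 /= e20 B2] : nbhs q S by apply: open_nbhs_nbhs; split.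
pose r := Num.min e1 e2.
have r0 : 0 < r by rewrite lt_min e10 e20.
have re1 : r <= e1 by rewrite ge_min lexx.
have re2 : r <= e2 by rewrite ge_min lexx orbT.
pose N := (Num.trunc (`|q - p| / r)).+1.
have N0 : (N%:R : R) != 0 by rewrite pnatr_eq0.
pose m (k : nat) := p + (k%:R / N%:R) *: (q - p).
have mS k : (k <= N)%N -> ball (m k) r `<=` S.
  move=> kN w; rewrite mxballE => Hw.
  pose d := w - m k.
  have -> : w = (p + d) + (k%:R / N%:R) *: ((q + d) - (p + d)).
    have e : (q + d) - (p + d) = q - p by rewrite opprD addrACA subrr addr0.
    by rewrite e addrAC /d addrC subrK.
  apply: convex_seg => //.
  - apply: B1; apply: (le_ball re1); rewrite mxballE opprD addrA subrr sub0r normrN.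
    by rewrite /d -normrN opprB.
  - apply: B2; apply: (le_ball re2); rewrite mxballE opprD addrA subrr sub0r normrN.
    by rewrite /d -normrN opprB.
  - by rewrite ler_pdivrMr ?mul1r ?ler_nat // ltr0n.
have mI k : {in I, forall i, m k 0 i = p 0 i}.
  by move=> i Hi; rewrite !mxE -pIq // subrr mulr0 addr0.
have step k : (k < N)%N -> F (m k.+1) = F (m k).
  move=> kN; symmetry; apply: (@ball_step _ _ _ _ _ _ _ _ HF (mS k (ltnW kN))).
    rewrite mxballE /m opprD addrACA subrr add0r -scalerBl.
    have -> : k%:R / N%:R - k.+1%:R / N%:R = - N%:R^-1 :> R.
      by rewrite -natr1; field.
    have H1 := truncnS_gt (`|q - p| / r).
    rewrite ltr_pdivrMr // in H1.
    rewrite normrZ normrN normfV normr_nat mulrC ltr_pdivrMr ?ltr0n // mulrC.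
    exact: H1.
  by move=> i Hi; rewrite !mI.
have mN : m N = q by rewrite /m divff // scale1r addrC subrK.
have m0 : m 0%N = p by rewrite /m mul0r scale0r addr0.
suff H : forall k, (k <= N)%N -> F (m k) = F p by rewrite -mN H.
elim => [_|k IH Hk]; first by rewrite m0.
by rewrite step // IH // ltnW.
Qed.

End Aux.
Arguments prjE {R}.
Arguments prj_eqP {R}.
Arguments extend_enum {R}.
Arguments prj_extend {R}.
Arguments subproj_prj {R}.
Arguments prjD {R}.
Arguments prjN {R}.
Arguments prjZ {R}.
Arguments sel_continuous {R}.
Arguments prj_continuous {R}.
Arguments extend_continuous {R}.
Arguments coord_continuous {R}.
Arguments cvg_rowP {R}.
Arguments convE {R}.
Arguments convex_seg {R}.
Arguments mxballE {R}.
Arguments coord_dep {R n} S I {T} F.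
Arguments ball_step {R}.
Arguments staircase {R}.

Section Aux2.
Variable R : realType.
Lemma cvg_comp_within (T : Type) (U V : topologicalType) (F : set_system T)
  {FF : Filter F} (f : T -> U) (g : U -> V) (B : set U) (u : U) :
  f @ F --> u -> (\forall t \near F, B (f t)) -> B u ->
  {within B, continuous g} -> (g \o f) @ F --> g u.
Proof.
move=> fu FB Bu gc.
have Hg := (subspace_continuousP B g).1 gc u Bu.
move=> W /Hg /fu Hfu; apply: filterS2 FB Hfu => t Bt H; exact: H Bt.
Qed.

Lemma extend0 n (I : {set 'I_n}) : extend I (0 : 'rV[R]_#|I|) = 0.
Proof. by apply/rowP => i; rewrite !mxE; case: pickP => // k _; rewrite mxE. Qed.

Lemma cont_affine (V W : normedModType R) (L : V -> W) (a : W) (c : V) :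
  continuous L -> continuous (fun w => a + L (w - c)).
Proof.
move=> Lc w.
apply: cvgD; first exact: cvg_cst.
apply: (cvg_comp (fun w => w - c) L); last exact: Lc.
apply: cvgB; [exact: cvg_id|exact: cvg_cst].
Qed.

Lemma shift_continuous n (I : {set 'I_n}) (z0 : 'rV[R]_n) (c : 'rV[R]_#|I|) :
  continuous (fun w : 'rV[R]_#|I| => z0 + extend I (w - c)).
Proof. exact: (@cont_affine 'rV[R]_#|I| 'rV[R]_n (extend I) z0 c (@extend_continuous R n I)). Qed.

Lemma section_cvg n (I : {set 'I_n}) (z0 : 'rV[R]_n) :
  let s := fun w : 'rV[R]_#|I| => z0 + extend I (w - prj I z0) in
  [/\ s @ prj I z0 --> z0, forall w, prj I (s w) = w & s (prj I z0) = z0].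
Proof.
move=> s; split.
- have := @shift_continuous n I z0 (prj I z0) (prj I z0).
  by rewrite /prop_for /continuous_at /= subrr extend0 addr0.
- by move=> w; rewrite /s prjD prj_extend addrC subrK.
- by rewrite /s subrr extend0 addr0.
Qed.

Lemma open_imprj n (Z : set 'rV[R]_n) (I : {set 'I_n}) :
  open Z -> open (imprj Z I).
Proof.
move=> oZ; rewrite openE => w [z0 Zz0 <-].
have [sc sp s0] := @section_cvg n I z0.
have HZ : nbhs z0 Z by apply: open_nbhs_nbhs; split.
have := sc _ HZ; rewrite /interior; apply: (@filterS _ _ (nbhs_filter (prj I z0))) => w1 Zw; exists (z0 + extend I (w1 - prj I z0)) => //.
Qed.

End Aux2.
Arguments extend0 {R}.
Arguments cont_affine {R}.
Arguments shift_continuous {R}.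
Arguments section_cvg {R}.
Arguments open_imprj {R}.

Section Aux3.
Variable R : realType.

Definition pre {dx dZ} (X : set 'rV[R]_dx) (psi : 'rV[R]_dx -> 'rV[R]_dZ)
  (z : 'rV[R]_dZ) : 'rV[R]_dx :=
  match pselect (exists x, X x /\ psi x = z) with
  | left H => proj1_sig (cid H) | right _ => 0 end.

Lemma preP dx dZ (X : set 'rV[R]_dx) (psi : 'rV[R]_dx -> 'rV[R]_dZ) z :
  (exists x, X x /\ psi x = z) -> X (pre X psi z) /\ psi (pre X psi z) = z.
Proof.
rewrite /pre; case: pselect => // H _; exact: (proj2_sig (cid H)).
Qed.

Lemma homeo_inj {T U : topologicalType} {A : set T} {B : set U} {f : T -> U} :
  homeo_on A B f -> forall a a', A a -> A a' -> f a = f a' -> a = a'.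
Proof.
move=> [_ [_ [g [_ gf _ _]]]] a a' Aa Aa' e.
by rewrite -(gf a Aa) e gf.
Qed.

Lemma minAIR_all {na dx P dY X Y y dZ Z psi I phi} :
  @is_minAIR R na dx P dY X Y y dZ Z psi I phi ->
  forall i : 'I_dZ, exists2 A, A \in P & i \in I A.
Proof.
move=> [_ _ dZE _ _] i.
have : i \in (\bigcup_(A in P) I A)%SET.
  have /subset_cardP H : #|(\bigcup_(A in P) I A)%SET| = #|[set: 'I_dZ]%SET|.
    by rewrite cardsT card_ord.
  by rewrite (H (finset.subsetT _)) inE.
by move=> /bigcupP[A HA Hi]; exists A.
Qed.

Lemma minAIR_eq {na dx P dY X Y y dZ Z psi I phi} (z z' : 'rV[R]_dZ) :
  @is_minAIR R na dx P dY X Y y dZ Z psi I phi ->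
  (forall A, A \in P -> prj (I A) z = prj (I A) z') -> z = z'.
Proof.
move=> H E; apply/rowP => i; have [A HA Hi] := minAIR_all H i.
by move/prj_eqP: (E A HA); apply.
Qed.

Section MA.
Variables (na dx : nat) (P : {set {set 'I_na}}) (dY : {set 'I_na} -> nat)
  (X : set 'rV[R]_dx) (Y : forall A, set 'rV[R]_(dY A))
  (y : forall A, 'rV[R]_dx -> 'rV[R]_(dY A))
  (dZ : nat) (Z : set 'rV[R]_dZ) (psi : 'rV[R]_dx -> 'rV[R]_dZ)
  (I : {set 'I_na} -> {set 'I_dZ})
  (phi : forall A, 'rV[R]_#|I A| -> 'rV[R]_(dY A)).
Hypothesis H : is_minAIR P dY X Y y Z psi I phi.

Lemma mA_psi x : X x -> Z (psi x).
Proof. by have := H; rewrite /is_minAIR /is_AIR => -[[_ H2 _ _] _ _ _ _]; exact: H2. Qed.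
Lemma mA_eq A x : A \in P -> X x -> phi A (prj (I A) (psi x)) = y A x.
Proof. by have := H; rewrite /is_minAIR /is_AIR => -[[_ _ _ H4] _ _ _ _] HA; case: (H4 A HA) => _ _ e; exact: e. Qed.
Lemma mA_maps A za : A \in P -> imprj Z (I A) za -> Y A (phi A za).
Proof. by have := H; rewrite /is_minAIR /is_AIR => -[[_ _ _ H4] _ _ _ _] HA; case: (H4 A HA) => e _ _; exact: e. Qed.
Lemma mA_cont A : A \in P -> {within imprj Z (I A), continuous (phi A)}.
Proof. by have := H; rewrite /is_minAIR /is_AIR => -[[_ _ _ H4] _ _ _ _] HA; case: (H4 A HA) => _ e _; exact: e. Qed.
Lemma mA_surj z : Z z -> exists x, X x /\ psi x = z.
Proof. by have := H; rewrite /is_minAIR /is_AIR => -[_ S _ _ _]; rewrite -S => -[x Xx <-]; exists x. Qed.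
Lemma mA_homeo A : A \in P -> homeo_on (imprj Z (I A)) (Y A) (phi A).
Proof. by have := H; rewrite /is_minAIR => -[_ _ _ H4 _]; exact: H4. Qed.
Lemma mA_open : open Z.
Proof. by have := H; rewrite /is_minAIR => -[]. Qed.
End MA.
Arguments mA_psi {na dx P dY X Y y dZ Z psi I phi} H {x}.
Arguments mA_eq {na dx P dY X Y y dZ Z psi I phi} H {A x}.
Arguments mA_maps {na dx P dY X Y y dZ Z psi I phi} H {A za}.
Arguments mA_cont {na dx P dY X Y y dZ Z psi I phi} H {A}.
Arguments mA_surj {na dx P dY X Y y dZ Z psi I phi} H {z}.
Arguments mA_homeo {na dx P dY X Y y dZ Z psi I phi} H {A}.
Arguments mA_open {na dx P dY X Y y dZ Z psi I phi} H.

Definition transp {dx dZ dC} (X : set 'rV[R]_dx) (psiz : 'rV[R]_dx -> 'rV[R]_dZ)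
  (psic : 'rV[R]_dx -> 'rV[R]_dC) (z : 'rV[R]_dZ) : 'rV[R]_dC :=
  psic (pre X psiz z).

Lemma tr_pre {na dx : nat} {P : {set {set 'I_na}}}
    {dY : {set 'I_na} -> nat} {X : set 'rV[R]_dx}
    {Y : forall A, set 'rV[R]_(dY A)}
    {y : forall A, 'rV[R]_dx -> 'rV[R]_(dY A)}
    {dZ : nat} {Z : set 'rV[R]_dZ} {psiz : 'rV[R]_dx -> 'rV[R]_dZ}
    {Iz : {set 'I_na} -> {set 'I_dZ}}
    {phiz : forall A, 'rV[R]_#|Iz A| -> 'rV[R]_(dY A)}
    {dC : nat} {C : set 'rV[R]_dC} {psic : 'rV[R]_dx -> 'rV[R]_dC}
    {Ic : {set 'I_na} -> {set 'I_dC}}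
    {phic : forall A, 'rV[R]_#|Ic A| -> 'rV[R]_(dY A)}
    (Hz : is_minAIR P dY X Y y Z psiz Iz phiz)
    (Hc : is_minAIR P dY X Y y C psic Ic phic) {z} : Z z ->
  X (pre X psiz z) /\ psiz (pre X psiz z) = z.
Proof. by move=> Zz; apply: preP; exact: mA_surj Hz _ Zz. Qed.

Lemma tr_X {na dx : nat} {P : {set {set 'I_na}}}
    {dY : {set 'I_na} -> nat} {X : set 'rV[R]_dx}
    {Y : forall A, set 'rV[R]_(dY A)}
    {y : forall A, 'rV[R]_dx -> 'rV[R]_(dY A)}
    {dZ : nat} {Z : set 'rV[R]_dZ} {psiz : 'rV[R]_dx -> 'rV[R]_dZ}
    {Iz : {set 'I_na} -> {set 'I_dZ}}
    {phiz : forall A, 'rV[R]_#|Iz A| -> 'rV[R]_(dY A)}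
    {dC : nat} {C : set 'rV[R]_dC} {psic : 'rV[R]_dx -> 'rV[R]_dC}
    {Ic : {set 'I_na} -> {set 'I_dC}}
    {phic : forall A, 'rV[R]_#|Ic A| -> 'rV[R]_(dY A)}
    (Hz : is_minAIR P dY X Y y Z psiz Iz phiz)
    (Hc : is_minAIR P dY X Y y C psic Ic phic) {x} : X x -> transp X psiz psic (psiz x) = psic x.
Proof.
move=> Xx; have [Xx' ex'] := tr_pre Hz Hc (mA_psi Hz Xx).
rewrite /transp; move: Xx' ex'; set x' := pre X psiz (psiz x) => Xx' ex'.
apply: (minAIR_eq _ _ Hc) => A HA.
apply: (homeo_inj (mA_homeo Hc HA)).
- exists (psic x') => //. exact (mA_psi Hc Xx').
- exists (psic x) => //. exact (mA_psi Hc Xx).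
by rewrite !(mA_eq Hc) // -(mA_eq Hz HA Xx') -(mA_eq Hz HA Xx) ex'.
Qed.

Lemma tr_C {na dx : nat} {P : {set {set 'I_na}}}
    {dY : {set 'I_na} -> nat} {X : set 'rV[R]_dx}
    {Y : forall A, set 'rV[R]_(dY A)}
    {y : forall A, 'rV[R]_dx -> 'rV[R]_(dY A)}
    {dZ : nat} {Z : set 'rV[R]_dZ} {psiz : 'rV[R]_dx -> 'rV[R]_dZ}
    {Iz : {set 'I_na} -> {set 'I_dZ}}
    {phiz : forall A, 'rV[R]_#|Iz A| -> 'rV[R]_(dY A)}
    {dC : nat} {C : set 'rV[R]_dC} {psic : 'rV[R]_dx -> 'rV[R]_dC}
    {Ic : {set 'I_na} -> {set 'I_dC}}
    {phic : forall A, 'rV[R]_#|Ic A| -> 'rV[R]_(dY A)}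
    (Hz : is_minAIR P dY X Y y Z psiz Iz phiz)
    (Hc : is_minAIR P dY X Y y C psic Ic phic) {z} : Z z -> C (transp X psiz psic z).
Proof. by move=> Zz; have [Xx _] := tr_pre Hz Hc Zz; exact (mA_psi Hc Xx). Qed.

Lemma tr_phi {na dx : nat} {P : {set {set 'I_na}}}
    {dY : {set 'I_na} -> nat} {X : set 'rV[R]_dx}
    {Y : forall A, set 'rV[R]_(dY A)}
    {y : forall A, 'rV[R]_dx -> 'rV[R]_(dY A)}
    {dZ : nat} {Z : set 'rV[R]_dZ} {psiz : 'rV[R]_dx -> 'rV[R]_dZ}
    {Iz : {set 'I_na} -> {set 'I_dZ}}
    {phiz : forall A, 'rV[R]_#|Iz A| -> 'rV[R]_(dY A)}
    {dC : nat} {C : set 'rV[R]_dC} {psic : 'rV[R]_dx -> 'rV[R]_dC}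
    {Ic : {set 'I_na} -> {set 'I_dC}}
    {phic : forall A, 'rV[R]_#|Ic A| -> 'rV[R]_(dY A)}
    (Hz : is_minAIR P dY X Y y Z psiz Iz phiz)
    (Hc : is_minAIR P dY X Y y C psic Ic phic) {z A} : Z z -> A \in P ->
  phic A (prj (Ic A) (transp X psiz psic z)) = phiz A (prj (Iz A) z).
Proof.
move=> Zz HA; have [Xx ex] := tr_pre Hz Hc Zz.
by rewrite /transp (mA_eq Hc) // -(mA_eq Hz HA Xx) ex.
Qed.

Lemma tr_dep {na dx : nat} {P : {set {set 'I_na}}}
    {dY : {set 'I_na} -> nat} {X : set 'rV[R]_dx}
    {Y : forall A, set 'rV[R]_(dY A)}
    {y : forall A, 'rV[R]_dx -> 'rV[R]_(dY A)}
    {dZ : nat} {Z : set 'rV[R]_dZ} {psiz : 'rV[R]_dx -> 'rV[R]_dZ}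
    {Iz : {set 'I_na} -> {set 'I_dZ}}
    {phiz : forall A, 'rV[R]_#|Iz A| -> 'rV[R]_(dY A)}
    {dC : nat} {C : set 'rV[R]_dC} {psic : 'rV[R]_dx -> 'rV[R]_dC}
    {Ic : {set 'I_na} -> {set 'I_dC}}
    {phic : forall A, 'rV[R]_#|Ic A| -> 'rV[R]_(dY A)}
    (Hz : is_minAIR P dY X Y y Z psiz Iz phiz)
    (Hc : is_minAIR P dY X Y y C psic Ic phic) {z z' A} : Z z -> Z z' -> A \in P ->
  prj (Iz A) z = prj (Iz A) z' ->
  prj (Ic A) (transp X psiz psic z) = prj (Ic A) (transp X psiz psic z').
Proof.
move=> Zz Zz' HA e.
apply: (homeo_inj (mA_homeo Hc HA)).
- exists (transp X psiz psic z) => //. exact (tr_C Hz Hc Zz).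
- exists (transp X psiz psic z') => //. exact (tr_C Hz Hc Zz').
by rewrite !(tr_phi Hz Hc) // e.
Qed.

Lemma tr_cont {na dx : nat} {P : {set {set 'I_na}}}
    {dY : {set 'I_na} -> nat} {X : set 'rV[R]_dx}
    {Y : forall A, set 'rV[R]_(dY A)}
    {y : forall A, 'rV[R]_dx -> 'rV[R]_(dY A)}
    {dZ : nat} {Z : set 'rV[R]_dZ} {psiz : 'rV[R]_dx -> 'rV[R]_dZ}
    {Iz : {set 'I_na} -> {set 'I_dZ}}
    {phiz : forall A, 'rV[R]_#|Iz A| -> 'rV[R]_(dY A)}
    {dC : nat} {C : set 'rV[R]_dC} {psic : 'rV[R]_dx -> 'rV[R]_dC}
    {Ic : {set 'I_na} -> {set 'I_dC}}
    {phic : forall A, 'rV[R]_#|Ic A| -> 'rV[R]_(dY A)}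
    (Hz : is_minAIR P dY X Y y Z psiz Iz phiz)
    (Hc : is_minAIR P dY X Y y C psic Ic phic) {z0} : Z z0 -> {for z0, continuous (transp X psiz psic)}.
Proof.
move=> Zz0.
have oZ := mA_open Hz.
have HZ : nbhs z0 Z by apply: open_nbhs_nbhs; split.
apply: (@cvg_rowP R _ _ (nbhs_filter z0)) => j.
have [A HA Hj] := minAIR_all Hc j.
have [k <-] := enum_val_surj Hj.
have [_ [_ [g [gY gphi phig gc]]]] := mA_homeo Hc HA.
pose f z := g (phiz A (prj (Iz A) z)).
have E : \forall z \near z0, f z 0 k = transp X psiz psic z 0 (enum_val k).
  apply: (filterS _ HZ) => z Zz.
  rewrite -prjE /f -(tr_phi Hz Hc Zz HA) gphi //.
  exists (transp X psiz psic z) => //. exact (tr_C Hz Hc Zz).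
have E0 := nbhs_singleton E.
rewrite -E0.
apply: cvg_trans (near_eq_cvg (f := fun z => f z 0 k) (g := fun z => transp X psiz psic z 0 (enum_val k)) E) _.
apply: (cvg_comp f (fun v => v 0 k)); last exact: coord_continuous.
rewrite /f; refine (@cvg_comp_within _ _ _ _ (nbhs_filter z0) (fun z => phiz A (prj (Iz A) z)) g (Y A) _ _ _ _ _).
- apply: (cvg_comp (prj (Iz A)) (phiz A)); first exact: prj_continuous.
  have := mA_cont Hz HA; rewrite continuous_open_subspace; last exact: open_imprj.
  apply; rewrite inE; by exists z0.
- apply: (filterS _ HZ) => z Zz; apply: (mA_maps Hz HA); by exists z.
- apply: (mA_maps Hz HA); by exists z0.
- exact: gc.
Qed.
End Aux3.
Arguments transp {R dx dZ dC}.
Arguments pre {R dx dZ}.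
Arguments tr_dep {R na dx P dY X Y y dZ Z psiz Iz phiz dC C psic Ic phic} Hz Hc {z z' A}.
Arguments tr_phi {R na dx P dY X Y y dZ Z psiz Iz phiz dC C psic Ic phic} Hz Hc {z A}.
Arguments tr_C {R na dx P dY X Y y dZ Z psiz Iz phiz dC C psic Ic phic} Hz Hc {z}.
Arguments tr_X {R na dx P dY X Y y dZ Z psiz Iz phiz dC C psic Ic phic} Hz Hc {x}.
Arguments tr_pre {R na dx P dY X Y y dZ Z psiz Iz phiz dC C psic Ic phic} Hz Hc {z}.
Arguments tr_cont {R na dx P dY X Y y dZ Z psiz Iz phiz dC C psic Ic phic} Hz Hc {z0}.
Arguments preP {R} dx dZ X psi z.
Arguments minAIR_all {R na dx P dY X Y y dZ Z psi I phi}.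
Arguments minAIR_eq {R na dx P dY X Y y dZ Z psi I phi} z z'.
Arguments mA_psi {R na dx P dY X Y y dZ Z psi I phi} H {x}.
Arguments mA_eq {R na dx P dY X Y y dZ Z psi I phi} H {A x}.
Arguments mA_maps {R na dx P dY X Y y dZ Z psi I phi} H {A za}.
Arguments mA_cont {R na dx P dY X Y y dZ Z psi I phi} H {A}.
Arguments mA_surj {R na dx P dY X Y y dZ Z psi I phi} H {z}.
Arguments mA_homeo {R na dx P dY X Y y dZ Z psi I phi} H {A}.
Arguments mA_open {R na dx P dY X Y y dZ Z psi I phi} H.

Section Aux4.
Variable R : realType.

Lemma line_cont (V : normedModType R) (a v : V) : continuous (fun t : R => a + t *: v).
Proof.
move=> t; apply: cvgD; first exact: cvg_cst.
by apply: cvgZl; exact: cvg_id.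
Qed.

Lemma notin_bigcap {na n} {AA : {set {set 'I_na}}} {I : {set 'I_na} -> {set 'I_n}} {j} :
  j \notin (\bigcap_(A in AA) I A)%SET -> exists2 A, A \in AA & j \notin I A.
Proof.
move=> Hj.
case: (pselect (exists2 A, A \in AA & j \notin I A)) => // H.
exfalso; move/negP: Hj; apply; apply/bigcapP => A HA.
apply/negPn/negP => HjA; apply: H; by exists A.
Qed.

Lemma tr_stair {na dx : nat} {P : {set {set 'I_na}}}
    {dY : {set 'I_na} -> nat} {X : set 'rV[R]_dx}
    {Y : forall A, set 'rV[R]_(dY A)}
    {y : forall A, 'rV[R]_dx -> 'rV[R]_(dY A)}
    {dZ : nat} {Z : set 'rV[R]_dZ} {psiz : 'rV[R]_dx -> 'rV[R]_dZ}
    {Iz : {set 'I_na} -> {set 'I_dZ}}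
    {phiz : forall A, 'rV[R]_#|Iz A| -> 'rV[R]_(dY A)}
    {dC : nat} {C : set 'rV[R]_dC} {psic : 'rV[R]_dx -> 'rV[R]_dC}
    {Ic : {set 'I_na} -> {set 'I_dC}}
    {phic : forall A, 'rV[R]_#|Ic A| -> 'rV[R]_(dY A)}
    (Hz : is_minAIR P dY X Y y Z psiz Iz phiz)
    (Hc : is_minAIR P dY X Y y C psic Ic phic) (AA : {set {set 'I_na}}) (S : set 'rV[R]_dZ) :
  AA \subset P -> S `<=` Z -> open S -> convex S ->
  forall z z', S z -> S z' -> {in (\bigcap_(A in AA) Iz A)%SET, forall i, z 0 i = z' 0 i} ->
  prj (\bigcap_(A in AA) Ic A)%SET (transp X psiz psic z) =
  prj (\bigcap_(A in AA) Ic A)%SET (transp X psiz psic z').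
Proof.
move=> AAP SZ oS cS.
apply: (@staircase R _ S _ _ (fun z => prj (\bigcap_(A in AA) Ic A)%SET (transp X psiz psic z))) => //.
move=> j Hj p q Sp Sq Hpq.
have [A HA HjA] := notin_bigcap Hj.
have HAP : A \in P := fintype.subsetP AAP _ HA.
have sub : (\bigcap_(A in AA) Ic A)%SET \subset Ic A := finset.bigcap_inf _ HA.
rewrite -!(subproj_prj _ _ _ _ sub); congr subproj.
apply: (tr_dep Hz Hc (SZ _ Sp) (SZ _ Sq) HAP).
apply/prj_eqP => i Hi; apply: Hpq.
by apply: contraNneq HjA => <-.
Qed.
End Aux4.

Arguments tr_stair {R na dx P dY X Y y dZ Z psiz Iz phiz dC C psic Ic phic} Hz Hc AA S.
Arguments line_cont {R} V a v.

Theorem theorem2 (R : realType) (na dx : nat) (P : {set {set 'I_na}})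
    (dY : {set 'I_na} -> nat) (X : set 'rV[R]_dx)
    (Y : forall A, set 'rV[R]_(dY A))
    (y : forall A, 'rV[R]_dx -> 'rV[R]_(dY A))
    (dZ : nat) (Z : set 'rV[R]_dZ) (psiz : 'rV[R]_dx -> 'rV[R]_dZ)
    (Iz : {set 'I_na} -> {set 'I_dZ})
    (phiz : forall A, 'rV[R]_#|Iz A| -> 'rV[R]_(dY A))
    (dC : nat) (C : set 'rV[R]_dC) (psic : 'rV[R]_dx -> 'rV[R]_dC)
    (Ic : {set 'I_na} -> {set 'I_dC})
    (phic : forall A, 'rV[R]_#|Ic A| -> 'rV[R]_(dY A))
    (phic_inv : forall A, 'rV[R]_(dY A) -> 'rV[R]_#|Ic A|)
    (Zp : set 'rV[R]_dZ) (AA : {set {set 'I_na}}) :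
  family_ok P dY X Y y ->
  is_minAIR P dY X Y y Z psiz Iz phiz ->
  is_minAIR P dY X Y y C psic Ic phic ->
  (* phic_inv A is the inverse (phi^(c)_A)^{-1} : Y_A -> C_A *)
  (forall A, A \in P ->
     (forall u, Y A u ->
        imprj C (Ic A) (phic_inv A u) /\ phic A (phic_inv A u) = u) /\
     (forall ca, imprj C (Ic A) ca -> phic_inv A (phic A ca) = ca)) ->
  Zp `<=` Z -> convex Zp -> open Zp ->
  AA \subset P -> AA != finset.set0 ->
  let IOz := (\bigcap_(A in AA) Iz A)%SET in
  let IOc := (\bigcap_(A in AA) Ic A)%SET in
  let ZOp := imprj Zp IOz in
  let gexpr A (zA : 'rV[R]_#|Iz A|) :=
    subproj IOc (Ic A) (phic_inv A (phiz A zA)) in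
  (* well-definedness: independent of A in AA and of the embedding i_A *)
  (forall A A', A \in AA -> A' \in AA ->
     forall (zA : 'rV[R]_#|Iz A|) (zA' : 'rV[R]_#|Iz A'|),
       imprj Zp (Iz A) zA -> imprj Zp (Iz A') zA' ->
       subproj IOz (Iz A) zA = subproj IOz (Iz A') zA' ->
       gexpr A zA = gexpr A' zA') /\
  (forall gO : 'rV[R]_#|IOz| -> 'rV[R]_#|IOc|,
     (forall zO, ZOp zO -> exists A, A \in AA /\
        exists zA : 'rV[R]_#|Iz A|, [/\ imprj Zp (Iz A) zA,
          subproj IOz (Iz A) zA = zO & gO zO = gexpr A zA]) ->
     let COp := gO @` ZOp in
     [/\ (forall c, COp c -> exists2 zO, ZOp zO & gO zO = c),
         {within ZOp, continuous gO},
         path_connected COp &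
         forall Cconv : set 'rV[R]_dC,
           convex Cconv -> open Cconv ->
           Cpatch P dY Iz phiz Zp C Ic phic `<=` Cconv -> Cconv `<=` C ->
           homeo_on ZOp COp gO /\ open COp]).
Proof.
move=> Hfam Hz Hc Hinv ZpZ cZp oZp AAP AA0 IOz IOc ZOp gexpr.
pose h := transp X psiz psic.
pose k := transp X psic psiz.
have oZ := mA_open Hz. have oC := mA_open Hc.
have hk c : C c -> h (k c) = c.
  move=> Cc; have [x [Xx <-]] := mA_surj Hc Cc.
  by rewrite /h /k (tr_X Hc Hz Xx) (tr_X Hz Hc Xx).
have kh z : Z z -> k (h z) = z.
  move=> Zz; have [x [Xx <-]] := mA_surj Hz Zz.
  by rewrite /h /k (tr_X Hz Hc Xx) (tr_X Hc Hz Xx).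
have subc A : A \in AA -> IOc \subset Ic A.
  by move=> HA; exact: finset.bigcap_inf.
have subz A : A \in AA -> IOz \subset Iz A.
  by move=> HA; exact: finset.bigcap_inf.
have gexprE A z : A \in AA -> Z z -> gexpr A (prj (Iz A) z) = prj IOc (h z).
  move=> HA Zz; have HAP : A \in P := fintype.subsetP AAP _ HA.
  rewrite /gexpr -(tr_phi Hz Hc Zz HAP) (Hinv A HAP).2; last first.
    by exists (h z) => //; exact (tr_C Hz Hc Zz).
  by rewrite subproj_prj // subc.
have stZ z z' : Zp z -> Zp z' -> prj IOz z = prj IOz z' ->
    prj IOc (h z) = prj IOc (h z').
  move=> H1 H2 /prj_eqP E; exact: (tr_stair Hz Hc AA Zp AAP ZpZ oZp cZp z z' H1 H2 E).
split.
  move=> A A' HA HA' zA zA' [z Zpz <-] [z' Zpz' <-] e.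
  rewrite !gexprE //; try exact: ZpZ.
  apply: stZ => //.
  by move: e; rewrite !subproj_prj ?subz.
move=> gO HgO COp.
have gOE z : Zp z -> gO (prj IOz z) = prj IOc (h z).
  move=> Zpz.
  have [A [HA [zA [[z1 Zpz1 <-] e ->]]]] : exists A, A \in AA /\
        exists zA : 'rV[R]_#|Iz A|, [/\ imprj Zp (Iz A) zA,
          subproj IOz (Iz A) zA = prj IOz z & gO (prj IOz z) = gexpr A zA].
    by apply: HgO; exists z.
  rewrite gexprE //; last exact: ZpZ.
  apply: stZ => //.
  by rewrite -e subproj_prj ?subz.
have gO_cont w : ZOp w -> {for w, continuous gO}.
  move=> [z0 Zpz0 <-].
  have [sc sp s0] := section_cvg dZ IOz z0.
  pose s := fun w : 'rV[R]_#|IOz| => z0 + extend IOz (w - prj IOz z0).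
  have HZp : nbhs z0 Zp by apply: open_nbhs_nbhs; split.
  have E : \forall w \near prj IOz z0, prj IOc (h (s w)) = gO w.
    apply: (@filterS _ _ (nbhs_filter (prj IOz z0)) _ _ _ (sc _ HZp)) => w1 Zpw.
    by have := gOE _ Zpw; rewrite (sp w1) => ->.
  rewrite /prop_for /continuous_at (gOE _ Zpz0).
  apply: cvg_trans (near_eq_cvg E) _.
  apply: (cvg_comp s (fun c => prj IOc (h c))); first exact: sc.
  apply: (cvg_comp h (prj IOc)); last exact: prj_continuous.
  exact: (tr_cont Hz Hc (ZpZ _ Zpz0)).
have gO_within : {within ZOp, continuous gO}.
  rewrite continuous_open_subspace; last exact: open_imprj.
  by move=> w; rewrite inE => Hw; exact: gO_cont.
have seg zO zO' t : ZOp zO -> ZOp zO' -> 0 <= t -> t <= 1 ->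
    ZOp (zO + t *: (zO' - zO)).
  case=> z Zpz <-; case=> z' Zpz' <- t0 t1.
  exists (z + t *: (z' - z)); first exact: (convex_seg _ _ _ _ _ cZp Zpz Zpz' t0 t1).
  by rewrite prjD prjZ prjD prjN.
split.
- by move=> c [zO HzO <-]; exists zO.
- exact: gO_within.
- move=> c c' [zO HzO <-] [zO' HzO' <-].
  exists (fun t => gO (zO + t *: (zO' - zO))); split.
  + by rewrite scale0r addr0.
  + by rewrite scale1r addrC subrK.
  + move=> t /andP[t0 t1]; exists (zO + t *: (zO' - zO)) => //; exact: seg.
  + apply: continuous_in_subspaceT => t; rewrite inE /= in_itv /= => /andP[t0 t1].
    apply: (cvg_comp (fun t => zO + t *: (zO' - zO)) gO).
      exact: line_cont.
    by apply: gO_cont; exact: seg.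
move=> Cconv cCc oCc CpCc CcC.
have hCc z : Zp z -> Cconv (h z).
  move=> Zpz; apply: CpCc; split; first exact (tr_C Hz Hc (ZpZ _ Zpz)).
  exists z; split => // A HA; exact: (tr_phi Hz Hc (ZpZ _ Zpz) HA).
have stC c c' : Cconv c -> Cconv c' -> prj IOc c = prj IOc c' ->
    prj IOz (k c) = prj IOz (k c').
  move=> H1 H2 /prj_eqP E; exact: (tr_stair Hc Hz AA Cconv AAP CcC oCc cCc c c' H1 H2 E).
have COpE w : COp w -> exists2 z, Zp z & prj IOc (h z) = w.
  by case=> zO [z Zpz <-] <-; exists z => //; rewrite gOE.
pose G z := prj IOc (h z).
pose ginv w := prj IOz (pre Zp G w).
have ginvE z : Zp z -> ginv (G z) = prj IOz z.
  move=> Zpz; have [Zp1 e1] := preP _ _ Zp G (G z) (ex_intro _ z (conj Zpz erefl)).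
  rewrite /ginv; move: Zp1 e1; set z1 := pre Zp G (G z) => Zp1 e1.
  rewrite -(kh _ (ZpZ _ Zp1)) -[in RHS](kh _ (ZpZ _ Zpz)).
  apply: stC; [exact: hCc | exact: hCc | exact: e1].
have ginvZO w : COp w -> ZOp (ginv w).
  by case/COpE => z Zpz <-; rewrite -/(G z) ginvE //; exists z.
have oCOp : open COp.
  rewrite openE => w [zO [z0 Zpz0 <-] <-]; rewrite /interior.
  have Cc0 : C (h z0) := tr_C Hz Hc (ZpZ _ Zpz0).
  have [sc sp s0] := section_cvg dC IOc (h z0).
  pose s := fun w : 'rV[R]_#|IOc| => h z0 + extend IOc (w - prj IOc (h z0)).
  have HC : nbhs (h z0) C by apply: open_nbhs_nbhs; split.
  have HZp : nbhs z0 Zp by apply: open_nbhs_nbhs; split.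
  have Hk : (fun w => k (s w)) @ prj IOc (h z0) --> z0.
    rewrite -{2}(kh _ (ZpZ _ Zpz0)).
    apply: (cvg_comp s k); first exact: sc.
    exact: (tr_cont Hc Hz Cc0).
  rewrite (gOE _ Zpz0).
  apply: (@filterS2 _ _ (nbhs_filter _) _ _ _ _ (sc _ HC) (Hk _ HZp)) => w1 Cw Zpw.
  exists (prj IOz (k (s w1))); first by exists (k (s w1)).
  by rewrite gOE // hk // sp.
split => //.
split; first by move=> zO HzO; exists zO.
split; first exact: gO_within.
exists ginv; split.
- exact: ginvZO.
- by move=> zO [z Zpz <-]; rewrite gOE // -/(G z) ginvE.
- by move=> w /COpE [z Zpz <-]; rewrite -/(G z) ginvE // gOE.
- rewrite continuous_open_subspace // => w; rewrite inE => -[zO [z0 Zpz0 <-] <-].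
  rewrite /prop_for /continuous_at (gOE _ Zpz0).
  have Cc0 : C (h z0) := tr_C Hz Hc (ZpZ _ Zpz0).
  have [sc sp s0] := section_cvg dC IOc (h z0).
  pose s := fun w : 'rV[R]_#|IOc| => h z0 + extend IOc (w - prj IOc (h z0)).
  have HCc : nbhs (h z0) Cconv by apply: open_nbhs_nbhs; split => //; exact: hCc.
  have HCOp : nbhs (prj IOc (h z0)) COp.
    apply: open_nbhs_nbhs; split => //; exists (prj IOz z0); first by exists z0.
    exact: gOE.
  have E : \forall w \near prj IOc (h z0), prj IOz (k (s w)) = ginv w.
    apply: (@filterS2 _ _ (nbhs_filter _) _ _ _ _ (sc _ HCc) HCOp) => w1 Cw /COpE [z Zpz ew]; subst w1.
    rewrite -/(G z) ginvE // -{2}(kh _ (ZpZ _ Zpz)).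
    apply: stC; [exact: Cw | exact: hCc | by rewrite sp].
  have -> : ginv (prj IOc (h z0)) = prj IOz (k (h z0)).
    by rewrite -/(G z0) ginvE // kh //; exact: ZpZ.
  apply: cvg_trans (near_eq_cvg E) _.
  apply: (cvg_comp s (fun c => prj IOz (k c))); first exact: sc.
  apply: (cvg_comp k (prj IOz)); last exact: prj_continuous.
  exact: (tr_cont Hc Hz Cc0).
Qed.
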